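(* Consider the group-based tree model of the context with $G=\mathbb{Z}_2\times\mathbb{Z}_2$ (the Kimura 3-parameter model) on a tree $\mathscr{T}$ with $m\ge3$ leaves all of whose non-leaf vertices have degree at least $3$, with arbitrary real edge parameters $\psi^{(e)}(C),\psi^{(e)}(G),\psi^{(e)}(T)$. For each pendant edge $e$ (leaf $i$, internal endpoint $\nu$) fix leaves $j,k\neq i$ whose connecting path passes through $\nu$ and set, for $h\in\{C,G,T\}$, $$R_e(h)=\frac{q_{w(h,h,A)}\,q_{w(h,A,h)}}{q_{w(A,h,h)}},$$ where $w(a,b,c)$ assigns $a,b,c$ to leaves $i,j,k$ and $A$ to all other leaves. For each internal edge $e$ (endpoints $\nu,\nu'$) fix leaves $i,j$ whose connecting path contains $\nu$ but not $\nu'$ and $i',j'$ whose connecting path contains $\nu'$ but not $\nu$, and set $$R_e(h)=\frac{q_{z(h,A,h,A)}\,q_{z(A,h,A,h)}}{q_{z(h,h,A,A)}\,q_{z(A,A,h,h)}},$$ where $z(a,b,c,d)$ assigns $a,b,c,d$ to $i,j,i',j'$ and $A$ to all other leaves. (All denominators are nonzero.) Then all edge parameters of all edges are non-negative if and only if for every edge $e$ $$R_e(C)R_e(T)\le R_e(G),\qquad R_e(G)R_e(T)\le R_e(C),\qquad R_e(C)R_e(G)\le R_e(T).$$ Moreover, for each edge $e$ these three inequalities are respectively equivalent to $\psi^{(e)}(C)\ge0$, $\psi^{(e)}(G)\ge0$, $\psi^{(e)}(T)\ge0$.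
   Context: Group-based model on a tree. $G=\mathbb{Z}_2\times\mathbb{Z}_2$ is written additively with elements identified as $A=(0,0)$, $C=(1,0)$, $G=(0,1)$, $T=(1,1)$; characters are $\widehat{(a,b)}((c,d))=(-1)^{ac+bd}$. The Fourier transform of $a$ on the group is $\check a(g)=\sum_{h}\hat g(h)a(h)$. $\mathscr{T}$ is a finite tree with $m$ leaves, one of which is designated the root leaf $r$. Each edge $e$ carries a function $\psi^{(e)}$ from the group to $\mathbb{R}$ with $\psi^{(e)}(A)=-(\psi^{(e)}(C)+\psi^{(e)}(G)+\psi^{(e)}(T))$ (the values at $C,G,T$ are the edge parameters); put $Q^{(e)}_{g,h}=\psi^{(e)}(h-g)$, $P^{(e)}=\exp(Q^{(e)})$, $f^{(e)}(h)=P^{(e)}_{A,h}$. Edges are directed away from $r$. For $\mathbf g$ in the $m$-fold product of the group (indexed by leaves, $r$ included), $p_{\mathbf g}=\sum_\sigma\prod_{e=(u\to v)}P^{(e)}_{\sigma(u),\sigma(v)}$, the sum over all maps $\sigma$ from vertices to the group with $\sigma(r)=A$ and $\sigma$ equal to $\mathbf g$ on leaves. Its Fourier transform is $q_{\mathbf g}=\sum_{\mathbf h}\prod_x\hat g_x(h_x)p_{\mathbf h}$. For an edge $e$, $\Lambda(e)$ is the set of leaves whose path to $r$ contains $e$, ${}^*g_e=\sum_{x\in\Lambda(e)}g_x$, and it is known (Hendy; Evans–Speed) that $q_{\mathbf g}=\prod_e\check f^{(e)}({}^*g_e)$. *)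

(* Defs.v *)
From Stdlib Require Import Reals Factorial.
From mathcomp Require Import all_boot.
Set Implicit Arguments.
Unset Strict Implicit.
Unset Printing Implicit Defensive.
Local Open Scope R_scope.

Notation grp := (bool * bool)%type.
Definition gA : grp := (false, false).
Definition gC : grp := (true, false).
Definition gG : grp := (false, true).
Definition gT : grp := (true, true).
(* addition (= subtraction) in Z2 x Z2 *)
Definition gadd (x y : grp) : grp := (xorb x.1 y.1, xorb x.2 y.2).
Definition chr (g h : grp) : R :=
  if xorb (g.1 && h.1) (g.2 && h.2) then (-1) else 1.

Definition sumR {X : Type} (s : seq X) (f : X -> R) : R :=
  foldr (fun x acc => f x + acc) 0 s.
Definition prodR {X : Type} (s : seq X) (f : X -> R) : R :=
  foldr (fun x acc => f x * acc) 1 s.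

Fixpoint matpow (Q : grp -> grp -> R) (n : nat) : grp -> grp -> R :=
  match n with
  | O => fun g h => if g == h then 1 else 0
  | S n' => fun g h => sumR (enum {: grp}) (fun k => matpow Q n' g k * Q k h)
  end.

Definition IsMatExp (Q P : grp -> grp -> R) : Prop :=
  forall g h, infinite_sum (fun n => matpow Q n g h / INR (fact n)) (P g h).

Definition Qmat (psi : grp -> R) (g h : grp) : R := psi (gadd h g).

Section Tree.
Variables (V : finType) (par : V -> V) (r : V).

(* par r = r, and every vertex reaches r by following parents:
   V with edges {par v, v} (v <> r) is a finite tree, edges directed
   away from r as (par v -> v).  The edge (par v -> v) is indexed by v. *)
Definition is_tree : Prop :=
  par r = r /\ forall v : V, exists n : nat, iter n par v = r.

Definition children (v : V) : {set V} := [set u | (u != r) && (par u == v)].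
Definition deg (v : V) : nat := (#|children v| + (v != r))%N.
Definition is_leaf (v : V) : bool := deg v == 1%N.

Definition anc (w x : V) : bool := [exists n : 'I_#|V|, iter n par x == w].

Definition on_path (w x y : V) : bool :=
  (anc w x && ~~ anc w y) || (anc w y && ~~ anc w x) ||
  [&& anc w x, anc w y &
      [forall c, ((c != r) && (par c == w)) ==> ~~ (anc c x && anc c y)]].

Definition leafT := {x : V | is_leaf x}.

(* pendant edge (par v -> v); its leaf endpoint i and internal endpoint nu *)
Definition pendant (v : V) : bool := (v != r) && (is_leaf v || (par v == r)).
Definition internal_edge (v : V) : bool := (v != r) && ~~ pendant v.
Definition pend_i (v : V) : V := if par v == r then r else v.
Definition pend_nu (v : V) : V := if par v == r then v else par v.

Definition pprob (P : V -> grp -> grp -> R) (g : {ffun leafT -> grp}) : R :=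
  sumR (enum {: {ffun V -> grp}}) (fun s =>
    if (s r == gA) && [forall x : leafT, s (val x) == g x]
    then prodR (enum {: V}) (fun v => if v == r then 1 else P v (s (par v)) (s v))
    else 0).

Definition qprob (P : V -> grp -> grp -> R) (g : {ffun leafT -> grp}) : R :=
  sumR (enum {: {ffun leafT -> grp}}) (fun h =>
    (prodR (enum {: leafT}) (fun x => chr (g x) (h x)) * pprob P h)).

Definition col3 (i j k : V) (a b c : grp) : {ffun leafT -> grp} :=
  [ffun x : leafT => if val x == i then a else if val x == j then b
                     else if val x == k then c else gA].
Definition col4 (i j i' j' : V) (a b c d : grp) : {ffun leafT -> grp} :=
  [ffun x : leafT => if val x == i then a else if val x == j then b
                     else if val x == i' then c else if val x == j' then d else gA].

Definition R_pend (P : V -> grp -> grp -> R) (i j k : V) (h : grp) : R :=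
  (qprob P (col3 i j k h h gA) * qprob P (col3 i j k h gA h)
   / qprob P (col3 i j k gA h h)).

Definition R_int (P : V -> grp -> grp -> R) (i j i' j' : V) (h : grp) : R :=
  (qprob P (col4 i j i' j' h gA h gA) * qprob P (col4 i j i' j' gA h gA h)
   / (qprob P (col4 i j i' j' h h gA gA) * qprob P (col4 i j i' j' gA gA h h))).

(* R_e(h) for the edge (par v -> v), given the fixed choices of leaves:
   pendant: j = cj v, k = ck v;  internal: i = ci v, j = cj v, i' = ci' v, j' = cj' v,
   where nu = par v and nu' = v. *)
Definition R_edge (P : V -> grp -> grp -> R) (ci cj ck ci' cj' : V -> V)
    (v : V) (h : grp) : R :=
  if pendant v then R_pend P (pend_i v) (cj v) (ck v) h
  else R_int P (ci v) (cj v) (ci' v) (cj' v) h.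

Definition good_choice (ci cj ck ci' cj' : V -> V) : Prop :=
  (forall v, pendant v ->
     [/\ is_leaf (cj v), is_leaf (ck v), cj v != pend_i v, ck v != pend_i v
       & on_path (pend_nu v) (cj v) (ck v)]) /\
  (forall v, internal_edge v ->
     [/\ is_leaf (ci v) && is_leaf (cj v), is_leaf (ci' v) && is_leaf (cj' v),
         on_path (par v) (ci v) (cj v) && ~~ on_path v (ci v) (cj v)
       & on_path v (ci' v) (cj' v) && ~~ on_path (par v) (ci' v) (cj' v)]).

End Tree.

(* Main.v *)
Require Import Defs.
From HB Require Import structures.
From Stdlib Require Import Reals Factorial Lra.
From mathcomp Require Import all_boot.

Module Aux.
Set Implicit Arguments.
Unset Strict Implicit.
Unset Printing Implicit Defensive.

Module PA.
Local Open Scope R_scope.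
Arguments Rinv : simpl never.

Lemma Rplus_0l (x : R) : 0 + x = x. Proof. ring. Qed.
Lemma Rmult_1l (x : R) : 1 * x = x. Proof. ring. Qed.
Lemma Rplus_A : associative Rplus. Proof. move=> x y z; ring. Qed.
Lemma Rmult_A : associative Rmult. Proof. move=> x y z; ring. Qed.
HB.instance Definition _ := Monoid.isComLaw.Build R 0 Rplus Rplus_A Rplus_comm Rplus_0l.
HB.instance Definition _ := Monoid.isComLaw.Build R 1 Rmult Rmult_A Rmult_comm Rmult_1l.
Lemma Rmult_0l (x : R) : 0 * x = 0. Proof. ring. Qed.
Lemma Rmult_0r (x : R) : x * 0 = 0. Proof. ring. Qed.
HB.instance Definition _ := Monoid.isMulLaw.Build R 0 Rmult Rmult_0l Rmult_0r.
Lemma Rdl : left_distributive Rmult Rplus. Proof. move=> x y z; ring. Qed.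
Lemma Rdr : right_distributive Rmult Rplus. Proof. move=> x y z; ring. Qed.
HB.instance Definition _ := Monoid.isAddLaw.Build R Rmult Rplus Rdl Rdr.

Lemma gadd_A : associative gadd. Proof. by case=> [[] []] [[] []] [[] []]. Qed.
Lemma gadd_C : commutative gadd. Proof. by case=> [[] []] [[] []]. Qed.
Lemma gadd_0l : left_id gA gadd. Proof. by case=> [[] []]. Qed.
HB.instance Definition _ := Monoid.isComLaw.Build grp gA gadd gadd_A gadd_C gadd_0l.

Lemma sumRE (X : Type) (s : seq X) f : sumR s f = \big[Rplus/0]_(x <- s) f x.
Proof. by elim: s => [|x s IH]; rewrite ?big_nil ?big_cons //= IH. Qed.
Lemma prodRE (X : Type) (s : seq X) f : prodR s f = \big[Rmult/1]_(x <- s) f x.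
Proof. by elim: s => [|x s IH]; rewrite ?big_nil ?big_cons //= IH. Qed.

Lemma sum_grp (F : grp -> R) :
  \big[Rplus/0]_(a : grp) F a = F gT + F gC + F gG + F gA.
Proof.
transitivity (\big[Rplus/0]_(p : grp | xpredT p.1 && xpredT p.2) F (p.1, p.2)).
  by apply: eq_bigr => -[a b].
rewrite -(pair_big xpredT xpredT (fun a b => F (a, b))) /=.
rewrite big_bool /= !big_bool /=.
rewrite /gA /gC /gG /gT; ring.
Qed.

Lemma sumR_enum (T : finType) (f : T -> R) : sumR (enum {: T}) f = \big[Rplus/0]_(x : T) f x.
Proof. by rewrite sumRE big_enum; apply: eq_bigl => x; rewrite inE. Qed.
Lemma prodR_enum (T : finType) (f : T -> R) : prodR (enum {: T}) f = \big[Rmult/1]_(x : T) f x.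
Proof. by rewrite prodRE big_enum; apply: eq_bigl => x; rewrite inE. Qed.

Definition psihat (f : grp -> R) (k : grp) : R :=
  chr k gA * f gA + chr k gC * f gC + chr k gG * f gG + chr k gT * f gT.
Definition Fou (f : grp -> R) (d : grp) : R :=
  / 4 * (chr gA d * exp (psihat f gA) + chr gC d * exp (psihat f gC)
         + chr gG d * exp (psihat f gG) + chr gT d * exp (psihat f gT)).
Definition mpc (f : grp -> R) (n : nat) (d : grp) : R :=
  / 4 * (chr gA d * psihat f gA ^ n + chr gC d * psihat f gC ^ n
         + chr gG d * psihat f gG ^ n + chr gT d * psihat f gT ^ n).

Lemma matpow_closed f n g h : matpow (Qmat f) n g h = mpc f n (gadd g h).
Proof.
elim: n g h => [|n IH] g h.
  by case: g h => [[] []] [[] []]; rewrite /mpc /psihat /chr /gadd /=; lra.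
rewrite /= (@sumR_enum grp) sum_grp !IH.
by case: g h => [[] []] [[] []]; rewrite /mpc /psihat /chr /Qmat /gA /gC /gG /gT /= /gadd /=; ring.
Qed.

Lemma isum_ext (u v : nat -> R) l : (forall n, u n = v n) -> infinite_sum u l -> infinite_sum v l.
Proof.
move=> E H eps He; case: (H eps He) => N HN; exists N => n Hn.
rewrite -(PartSum.sum_eq u v n); last by move=> i _; apply: E.
exact: HN.
Qed.

Lemma cv_const (a : R) : Un_cv (fun _ => a) a.
Proof. move=> eps He; exists 0%nat => n _; rewrite /Rdist Rminus_diag Rabs_R0; lra. Qed.

Lemma isum_scal (u : nat -> R) a l : infinite_sum u l -> infinite_sum (fun n => a * u n) (a * l).
Proof.
move=> H.
have H2 : Un_cv (fun n => a * sum_f_R0 u n) (a * l) by apply: CV_mult; [apply: cv_const | exact: H].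
move=> eps He; case: (H2 eps He) => N HN; exists N => n Hn.
have -> : sum_f_R0 (fun n => a * u n) n = a * sum_f_R0 u n.
  by elim: n {Hn} => [|n IH] /=; [ring | rewrite IH; ring].
exact: HN.
Qed.

Lemma isum_plus (u v : nat -> R) l1 l2 : infinite_sum u l1 -> infinite_sum v l2 ->
  infinite_sum (fun n => u n + v n) (l1 + l2).
Proof.
move=> H1 H2.
have H3 : Un_cv (fun n => sum_f_R0 u n + sum_f_R0 v n) (l1 + l2) by apply: CV_plus.
move=> eps He; case: (H3 eps He) => N HN; exists N => n Hn.
rewrite sum_plus; exact: HN.
Qed.

Lemma isum_exp x : infinite_sum (fun i => / INR (fact i) * x ^ i) (exp x).
Proof. exact: (proj2_sig (exist_exp x)). Qed.

Lemma P_fourier f P : IsMatExp (Qmat f) P -> forall g h, P g h = Fou f (gadd g h).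
Proof.
move=> H g h; have := H g h.
set d := gadd g h.
move=> H1; apply: (uniqueness_sum _ _ _ H1).
apply: (isum_ext (u := fun n => / 4 * (chr gA d * (/ INR (fact n) * psihat f gA ^ n)
   + chr gC d * (/ INR (fact n) * psihat f gC ^ n)
   + chr gG d * (/ INR (fact n) * psihat f gG ^ n)
   + chr gT d * (/ INR (fact n) * psihat f gT ^ n)))).
  move=> n; rewrite matpow_closed /mpc -/d.
  have := INR_fact_neq_0 n; move=> Hn; field; exact: Hn.
rewrite /Fou; apply: isum_scal.
by repeat apply: isum_plus; apply: isum_scal; apply: isum_exp.
Qed.

Lemma chr_addr k a b : chr k (gadd a b) = chr k a * chr k b.
Proof. by case: k a b => [[] []] [[] []] [[] []]; rewrite /chr /=; ring. Qed.
Lemma chr_addl k a b : chr (gadd a b) k = chr a k * chr b k.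
Proof. by case: k a b => [[] []] [[] []] [[] []]; rewrite /chr /=; ring. Qed.
Lemma chr_0r k : chr k gA = 1. Proof. by case: k => [[] []]. Qed.
Lemma chr_0l k : chr gA k = 1. Proof. by case: k => [[] []]. Qed.

Lemma fou_hat f k : \big[Rplus/0]_(a : grp) (chr k a * Fou f a) = exp (psihat f k).
Proof.
rewrite sum_grp; case: k => [[] []]; rewrite /Fou /chr /gA /gC /gG /gT /=; field.
Qed.

Lemma gaddK a b : gadd (gadd a b) b = a. Proof. by case: a b => [[] []] [[] []]. Qed.
Lemma gaddKl a b : gadd b (gadd a b) = a. Proof. by case: a b => [[] []] [[] []]. Qed.
Lemma gaddKr a b : gadd b (gadd b a) = a. Proof. by case: a b => [[] []] [[] []]. Qed.
Lemma gadd0l a : gadd gA a = a. Proof. by case: a => [[] []]. Qed.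
Lemma gadd0r a : gadd a gA = a. Proof. by case: a => [[] []]. Qed.
Lemma gaddxx a : gadd a a = gA. Proof. by case: a => [[] []]. Qed.
Lemma sumR_enumT (T : finType) (f : T -> R) : sumR (enum T) f = \big[Rplus/0]_(x : T) f x.
Proof. exact: sumR_enum. Qed.
Lemma prodR_enumT (T : finType) (f : T -> R) : prodR (enum T) f = \big[Rmult/1]_(x : T) f x.
Proof. exact: prodR_enum. Qed.

End PA.
Export PA.

Module PB.

Section TreeFacts.
Variables (V : finType) (par : V -> V) (r : V).
Hypothesis Ht : is_tree par r.
Local Notation anc := (anc par).

Lemma iter_r n : iter n par r = r.
Proof. by elim: n => //= n ->; case: Ht. Qed.

Lemma ancP w x : reflect (exists n, iter n par x = w) (anc w x).
Proof.
apply: (iffP existsP) => [[n /eqP <-]|[n Hn]]; first by exists n.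
have Hc : fconnect par x w by rewrite -Hn; apply: fconnect_iter.
have Hlt : findex par x w < #|V|.
  apply: (leq_trans (findex_max Hc)); exact: max_card.
by exists (Ordinal Hlt); rewrite /= iter_findex.
Qed.

Lemma anc_refl x : anc x x. Proof. by apply/ancP; exists 0%N. Qed.
Lemma anc_par x : anc (par x) x. Proof. by apply/ancP; exists 1%N. Qed.
Lemma anc_trans a b c : anc a b -> anc b c -> anc a c.
Proof.
move=> /ancP[n Hn] /ancP[m Hm]; apply/ancP; exists (n + m)%N.
by rewrite iterD Hm.
Qed.
Lemma anc_r x : anc r x.
Proof. case: Ht => _ H; case: (H x) => n Hn; apply/ancP; by exists n. Qed.
Lemma anc_to_r w : anc w r -> w = r.
Proof. by move=> /ancP[n]; rewrite iter_r. Qed.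

Lemma no_period v n : iter n.+1 par v = v -> v = r.
Proof.
move=> Hv; case: Ht => _ H; case: (H v) => k Hk.
have E : forall m, iter (m * n.+1) par v = v.
  elim=> [|m IH] //; by rewrite mulSn iterD IH.
have := E k; rewrite mulnS addnC iterD Hk iter_r.
by move=> <-.
Qed.

Lemma par_fix x : par x = x -> x = r.
Proof. by move=> H; apply: (@no_period x 0). Qed.

Lemma anc_antisym a b : anc a b -> anc b a -> a = b.
Proof.
move=> /ancP[n Hn] /ancP[m Hm].
case: n Hn => [|n] Hn; first by rewrite -Hn.
have : iter (n.+1 + m) par a = a by rewrite iterD Hm.
rewrite addSn => /no_period Ha.
by move: Hm; rewrite Ha iter_r.
Qed.

Lemma anc_comp a b x : anc a x -> anc b x -> anc a b || anc b a.
Proof.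
move=> /ancP[n Hn] /ancP[m Hm].
case: (leqP n m) => H.
  apply/orP; right; apply/ancP; exists (m - n)%N.
  by rewrite -Hn -iterD subnK.
apply/orP; left; apply/ancP; exists (n - m)%N.
by rewrite -Hm -iterD subnK // ltnW.
Qed.

Lemma anc_step w v : v != r -> anc w v = (w == v) || anc w (par v).
Proof.
move=> Hv; apply/idP/idP.
  move=> /ancP[[|n] Hn]; first by rewrite -Hn eqxx.
  by apply/orP; right; apply/ancP; exists n; rewrite -iterSr.
case/orP => [/eqP ->|H]; first exact: anc_refl.
exact: anc_trans H (anc_par v).
Qed.

Lemma not_anc_par v : v != r -> ~~ anc v (par v).
Proof.
move=> Hv; apply/negP => H.
have E := anc_antisym H (anc_par v).
by move: Hv; rewrite (par_fix (esym E)) eqxx.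
Qed.

Lemma child_on_path a b : anc a b -> a != b ->
  exists c, [/\ c != r, par c = a & anc c b].
Proof.
move=> /ancP Hex Hab.
have Hex' : exists n, iter n par b == a by case: Hex => n Hn; exists n; apply/eqP.
pose n := ex_minn Hex'.
have Hn : iter n par b = a by apply/eqP; rewrite /n; case: ex_minnP.
have Hmin : forall m, iter m par b == a -> (n <= m)%N by rewrite /n; case: ex_minnP.
case: n Hn Hmin => [|n] Hn Hmin; first by move: Hab; rewrite -Hn /= eqxx.
exists (iter n par b); split.
- apply/eqP => Hr.
  have Har : a = r by rewrite -Hn /= Hr; case: Ht.
  have := Hmin n; rewrite Hr Har eqxx ltnn; by move=> /(_ isT).
- exact: Hn.
- by apply/ancP; exists n.
Qed.

Lemma strict_anc a v : anc a v -> a != v -> anc a (par v).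
Proof.
move=> H Hne; have Hv : v != r.
  apply/eqP => E; move: H Hne; rewrite E => /anc_to_r ->; by rewrite eqxx.
by move: H; rewrite anc_step // (negbTE Hne).
Qed.

Lemma leaf_nochild x c : is_leaf par r x -> x != r -> c != r -> par c != x.
Proof.
rewrite /is_leaf /deg => Hl Hx Hc; apply/eqP => E.
move: Hl; rewrite Hx addn1 eqSS => /eqP/cards0_eq H.
have : c \in children par r x by rewrite inE Hc E eqxx.
by rewrite H inE.
Qed.

Lemma leaf_anc x y : is_leaf par r x -> x != r -> anc x y -> y = x.
Proof.
move=> Hl Hx Ha; apply/eqP; rewrite eq_sym; apply/negPn/negP => Hne.
case: (child_on_path Ha Hne) => c [Hc Hpc _].
by move: (leaf_nochild Hl Hx Hc); rewrite Hpc eqxx.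
Qed.

Lemma root_child_unique c c' : is_leaf par r r -> c != r -> par c = r -> c' != r -> par c' = r -> c = c'.
Proof.
rewrite /is_leaf /deg eqxx addn0 => /cards1P[c0 H] Hc Hpc Hc' Hpc'.
have : c \in children par r r by rewrite inE Hc Hpc eqxx.
have : c' \in children par r r by rewrite inE Hc' Hpc' eqxx.
by rewrite H !inE => /eqP -> /eqP ->.
Qed.

Lemma all_desc v x : is_leaf par r r -> v != r -> par v = r -> x != r -> anc v x.
Proof.
move=> Hl Hv Hpv Hx.
have Hne : r != x by rewrite eq_sym.
case: (child_on_path (anc_r x) Hne) => c [Hc Hpc Hcx].
by rewrite (root_child_unique Hl Hv Hpv Hc Hpc).
Qed.

Lemma on_path_sym w x y : on_path par r w x y = on_path par r w y x.
Proof.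
rewrite /on_path; case: (anc w x); case: (anc w y) => //=.
by apply: eq_forallb => c; rewrite [anc c x && _]andbC.
Qed.

Lemma on_path_anc w x y : on_path par r w x y -> anc w x || anc w y.
Proof. by rewrite /on_path; case: (anc w x); case: (anc w y). Qed.

Lemma on_path_lca w x y : on_path par r w x y -> anc w x -> anc w y ->
  forall c, c != r -> par c = w -> ~~ (anc c x && anc c y).
Proof.
rewrite /on_path => + Hx Hy; rewrite Hx Hy /= => /forallP H c Hc Hpc.
by have := H c; rewrite Hc Hpc eqxx.
Qed.

Lemma on_path_intro3 w x y : anc w x -> anc w y ->
  (forall c, c != r -> par c = w -> ~~ (anc c x && anc c y)) -> on_path par r w x y.
Proof.
move=> Hx Hy H; rewrite /on_path Hx Hy /=; apply/forallP => c.
by apply/implyP => /andP[Hc /eqP Hpc]; apply: H.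
Qed.

Lemma on_path_intro1 w x y : anc w x -> ~~ anc w y -> on_path par r w x y.
Proof. by rewrite /on_path => -> ->. Qed.

Lemma on_path_self w x : on_path par r w x x -> w = x.
Proof.
move=> H; have Hx : anc w x by have := on_path_anc H; rewrite orbb.
apply/eqP; apply/negPn/negP => Hne.
case: (child_on_path Hx Hne) => c [Hc Hpc Hcx].
by have := on_path_lca H Hx Hx Hc Hpc; rewrite Hcx.
Qed.

Lemma child_uniq c v x : c != r -> v != r -> par c = par v -> anc c x -> anc v x -> c = v.
Proof.
move=> Hc Hv Hp Hcx Hvx.
case/orP: (anc_comp Hcx Hvx) => H; apply/eqP; apply/negPn/negP => Hne.
- have := strict_anc H Hne; rewrite -Hp => H2.
  have E := anc_antisym H2 (anc_par c).
  by move: Hc; rewrite (par_fix (esym E)) eqxx.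
- rewrite eq_sym in Hne; have := strict_anc H Hne; rewrite Hp => H2.
  have E := anc_antisym H2 (anc_par v).
  by move: Hv; rewrite (par_fix (esym E)) eqxx.
Qed.

Lemma side_in_aux v x y : v != r -> anc v x -> on_path par r v x y ->
  ~~ on_path par r (par v) x y -> anc v y.
Proof.
move=> Hv Hx _ Hn; case Hy0 : (anc v y) => //; have Hy : ~~ anc v y by rewrite Hy0.
exfalso; apply: (negP Hn).
have Hpx : anc (par v) x := anc_trans (anc_par v) Hx.
case Hpy : (anc (par v) y); last by apply: on_path_intro1; rewrite ?Hpy.
apply: on_path_intro3 => // c Hc Hpc; apply/negP => /andP[Hcx Hcy].
by move: Hy; rewrite -(child_uniq Hc Hv Hpc Hcx Hx) Hcy.
Qed.

Lemma side_in v x y : v != r -> on_path par r v x y ->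
  ~~ on_path par r (par v) x y -> anc v x && anc v y.
Proof.
move=> Hv H Hn; case/orP: (on_path_anc H) => Ha.
- by rewrite Ha (side_in_aux Hv Ha H Hn).
- rewrite on_path_sym in H; rewrite on_path_sym in Hn.
  by rewrite Ha (side_in_aux Hv Ha H Hn).
Qed.

Lemma side_out_aux v x y : v != r -> on_path par r (par v) x y ->
  ~~ on_path par r v x y -> ~~ anc v x.
Proof.
move=> Hv H Hn; apply/negP => Hx.
case Hy : (anc v y); last by apply: (negP Hn); apply: on_path_intro1; rewrite ?Hy.
have Hpx := anc_trans (anc_par v) Hx.
have Hpy := anc_trans (anc_par v) Hy.
by have := on_path_lca H Hpx Hpy Hv erefl; rewrite Hx Hy.
Qed.

Lemma side_out v x y : v != r -> on_path par r (par v) x y ->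
  ~~ on_path par r v x y -> ~~ anc v x && ~~ anc v y.
Proof.
move=> Hv H Hn; rewrite (side_out_aux Hv H Hn) /=.
rewrite on_path_sym in H; rewrite on_path_sym in Hn.
exact: (side_out_aux Hv H Hn).
Qed.
End TreeFacts.

End PB.
Export PB.

Module PC.
Local Open Scope R_scope.
Arguments Rinv : simpl never.

Section Q.
Variables (V : finType) (par : V -> V) (r : V).
Hypothesis Ht : is_tree par r.
Local Notation anc := (anc par).

Lemma sum_anc_step (d : V -> grp) v : v != r ->
  \big[gadd/gA]_(w | anc w v) d w = gadd (d v) (\big[gadd/gA]_(w | anc w (par v)) d w).
Proof.
move=> Hv; rewrite (bigD1 v) ?anc_refl //=; congr gadd; apply: eq_bigl => w.
rewrite (anc_step _ _ Hv); case: (eqVneq w v) => [->|Hne] /=.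
  by rewrite (negbTE (not_anc_par Ht Hv)).
by rewrite andbT.
Qed.

Lemma sum_anc_r (d : V -> grp) : \big[gadd/gA]_(w | anc w r) d w = d r.
Proof.
rewrite (big_pred1 r) // => w; apply/idP/eqP => [/(anc_to_r Ht) //|->]; exact: anc_refl.
Qed.

Definition Sf (d : {ffun V -> grp}) : {ffun V -> grp} :=
  [ffun v => \big[gadd/gA]_(w | anc w v) d w].
Definition Df (s : {ffun V -> grp}) : {ffun V -> grp} :=
  [ffun v => if v == r then s r else gadd (s v) (s (par v))].

Lemma Sf_bij : bijective Sf.
Proof.
exists Df.
  move=> d; apply/ffunP => v; rewrite !ffunE; case: (eqVneq v r) => [->|Hv].
    by rewrite ?ffunE sum_anc_r.
  by rewrite ?ffunE sum_anc_step // gaddK.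
move=> s; apply/ffunP => v; rewrite ffunE.
case: Ht => _ H; case: (H v) => n Hn.
elim: n v Hn => [|n IH] v Hn.
  by rewrite /= in Hn; rewrite Hn sum_anc_r ffunE eqxx.
case: (eqVneq v r) => [->|Hv]; first by rewrite sum_anc_r ffunE eqxx.
rewrite sum_anc_step // IH; last by rewrite -iterSr.
by rewrite ffunE (negbTE Hv) gaddK.
Qed.

Lemma SfE d v : Sf d v = \big[gadd/gA]_(w | anc w v) d w.
Proof. by rewrite ffunE. Qed.

Lemma Sf_r d : Sf d r = d r.
Proof. by rewrite ffunE sum_anc_r. Qed.
Lemma Sf_step d v : v != r -> gadd (Sf d (par v)) (Sf d v) = d v.
Proof. by move=> Hv; rewrite !ffunE (sum_anc_step _ Hv) gaddKl. Qed.


Definition Gsum (g : {ffun leafT par r -> grp}) (w : V) : grp :=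
  \big[gadd/gA]_(x : leafT par r | anc w (val x)) g x.

Variables (psi : V -> grp -> R) (P : V -> grp -> grp -> R).
Hypothesis HP : forall v, v != r -> forall x y, P v x y = Fou (psi v) (gadd x y).

Definition Wt (s : {ffun V -> grp}) : R :=
  prodR (enum {: V}) (fun v => if v == r then 1 else P v (s (par v)) (s v)).

Lemma forall_ffun_val (s : {ffun V -> grp}) :
  [forall x : leafT par r, s (val x) == [ffun x0 : leafT par r => s (val x0)] x].
Proof. by apply/forallP => x; rewrite ffunE. Qed.

Lemma qprob_step1 g : @qprob V par r P g =
  \big[Rplus/0]_(s : {ffun V -> grp})
     (if s r == gA then (\big[Rmult/1]_(x : leafT par r) chr (g x) (s (val x))) * Wt s else 0).
Proof.
rewrite /qprob (@sumR_enum {ffun leafT par r -> grp}).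
under eq_bigr => h _ do rewrite (@prodR_enum (leafT par r)) /pprob (@sumR_enum {ffun V -> grp}) big_distrr.
rewrite exchange_big /=; apply: eq_bigr => s _.
rewrite (bigD1 [ffun x : leafT par r => s (val x)]) //= [X in _ + X]big1.
  rewrite forall_ffun_val.
  rewrite andbT; case: (s r == gA); rewrite /Wt.
  - under eq_bigr => x _ do rewrite ffunE.
    by rewrite Rplus_0_r.
  - by rewrite Rmult_0_r Rplus_0_r.
move=> h Hh; case: ifP; last by rewrite Rmult_0_r.
case/andP => _ /forallP H; exfalso; move/eqP: Hh; apply.
by apply/ffunP => x; rewrite ffunE; apply/eqP; rewrite eq_sym.
Qed.

Definition phi (g : {ffun leafT par r -> grp}) w a : R :=
  if w == r then (if a == gA then 1 else 0) else chr (Gsum g w) a * Fou (psi w) a.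

Lemma chr_prod (g : {ffun leafT par r -> grp}) d :
  \big[Rmult/1]_(x : leafT par r) chr (g x) (Sf d (val x)) =
  \big[Rmult/1]_(w : V) chr (Gsum g w) (d w).
Proof.
rewrite (eq_bigr (fun x : leafT par r => \big[Rmult/1]_(w | anc w (val x)) chr (g x) (d w))); last first.
  by move=> x _; rewrite SfE (big_morph (chr (g x)) (chr_addr _) (chr_0r _)).
rewrite (exchange_big_dep xpredT) //=; apply: eq_bigr => w _.
by rewrite /Gsum (big_morph (fun k => chr k (d w)) (fun a b => chr_addl (d w) a b) (chr_0l _)).
Qed.

Lemma qprob_step2 g : @qprob V par r P g =
  \big[Rplus/0]_(d : {ffun V -> grp}) \big[Rmult/1]_(w : V) phi g w (d w).
Proof.
rewrite qprob_step1 (reindex (Sf) (onW_bij _ Sf_bij)); apply: eq_bigr => d _.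
rewrite Sf_r chr_prod.
have -> : Wt (Sf d) = \big[Rmult/1]_(w : V) (if w == r then 1 else Fou (psi w) (d w)).
  rewrite /Wt prodR_enum; apply: eq_bigr => w _; case: eqP => // /eqP Hw.
  by rewrite HP // Sf_step.
case: eqP => Hdr.
  rewrite -big_split /=; apply: eq_bigr => w _; rewrite /phi.
  by case: eqP => [->|//]; rewrite Hdr eqxx chr_0r Rmult_1_r.
by rewrite (bigD1 r) //= /phi eqxx; case: eqP => // _; rewrite Rmult_0_l.
Qed.

Lemma qprob_formula g : @qprob V par r P g =
  exp (\big[Rplus/0]_(w | w != r) psihat (psi w) (Gsum g w)).
Proof.
rewrite qprob_step2 -bigA_distr_bigA (bigD1 r) //=.
rewrite (big_morph exp exp_plus exp_0).
have -> : \big[Rplus/0]_(a : grp) phi g r a = 1.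
  by rewrite sum_grp /phi eqxx /gA /gC /gG /gT /=; ring.
rewrite Rmult_1_l; apply: eq_bigr => w Hw.
rewrite /phi (negbTE Hw); exact: fou_hat.
Qed.
End Q.

End PC.
Export PC.

Module PD.
Local Open Scope R_scope.
Arguments Rinv : simpl never.

Section D.
Variables (V : finType) (par : V -> V) (r : V).
Local Notation anc := (anc par).

Definition sel (b : bool) (a : grp) : grp := if b then a else gA.

Lemma sum_single (i : V) (Hi : is_leaf par r i) w a :
  \big[gadd/gA]_(x : leafT par r | anc w (val x)) sel (val x == i) a = sel (anc w i) a.
Proof.
rewrite big_mkcond /=.
rewrite (eq_bigr (fun x : leafT par r => if val x == i then sel (anc w i) a else gA)); last first.
  by move=> x _; case: eqP => [->|_]; rewrite /sel //; case: ifP.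
rewrite -big_mkcond /= (big_pred1 (exist _ i Hi)) //.
Qed.

Lemma Gsum_col3 i j k (Hi : is_leaf par r i) (Hj : is_leaf par r j) (Hk : is_leaf par r k)
  a b c w : i != j -> i != k -> j != k ->
  @Gsum V par r (col3 par r i j k a b c) w = gadd (gadd (sel (anc w i) a) (sel (anc w j) b)) (sel (anc w k) c).
Proof.
move=> Hij Hik Hjk; rewrite /Gsum.
rewrite (eq_bigr (fun x : leafT par r => gadd (gadd (sel (val x == i) a) (sel (val x == j) b)) (sel (val x == k) c))); last first.
  move=> x _; rewrite ffunE /sel.
  case: (eqVneq (val x) i) => [E|Ni]; first by rewrite -E in Hij Hik; rewrite (negbTE Hij) (negbTE Hik) !gadd0r.
  case: (eqVneq (val x) j) => [E|Nj]; first by rewrite -E in Hjk; rewrite (negbTE Hjk) gadd0r gadd0l.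
  by case: (eqVneq (val x) k) => [E|Nk]; rewrite !gadd0l.
by rewrite !big_split /= !(sum_single Hi) !(sum_single Hj) !(sum_single Hk).
Qed.

Lemma Gsum_col4 i j k l (Hi : is_leaf par r i) (Hj : is_leaf par r j) (Hk : is_leaf par r k)
  (Hl : is_leaf par r l) a b c d w : i != j -> i != k -> i != l -> j != k -> j != l -> k != l ->
  @Gsum V par r (col4 par r i j k l a b c d) w =
  gadd (gadd (gadd (sel (anc w i) a) (sel (anc w j) b)) (sel (anc w k) c)) (sel (anc w l) d).
Proof.
move=> Hij Hik Hil Hjk Hjl Hkl; rewrite /Gsum.
rewrite (eq_bigr (fun x : leafT par r => gadd (gadd (gadd (sel (val x == i) a) (sel (val x == j) b)) (sel (val x == k) c)) (sel (val x == l) d))); last first.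
  move=> x _; rewrite ffunE /sel.
  case: (eqVneq (val x) i) => [E|Ni]; first by rewrite -E in Hij Hik Hil; rewrite (negbTE Hij) (negbTE Hik) (negbTE Hil) !gadd0r.
  case: (eqVneq (val x) j) => [E|Nj]; first by rewrite -E in Hjk Hjl; rewrite (negbTE Hjk) (negbTE Hjl) !gadd0r gadd0l.
  case: (eqVneq (val x) k) => [E|Nk]; first by rewrite -E in Hkl; rewrite (negbTE Hkl) !gadd0r !gadd0l.
  by case: (eqVneq (val x) l) => [E|Nl]; rewrite !gadd0l.
by rewrite !big_split /= !(sum_single Hi) !(sum_single Hj) !(sum_single Hk) !(sum_single Hl).
Qed.
End D.

Lemma pend_term f h a b c : psihat f gA = 0 ->
  psihat f (gadd (gadd (sel a h) (sel b h)) (sel c gA))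
  + psihat f (gadd (gadd (sel a h) (sel b gA)) (sel c h))
  - psihat f (gadd (gadd (sel a gA) (sel b h)) (sel c h))
  = if (a && ~~ b && ~~ c) || (~~ a && b && c) then 2 * psihat f h else 0.
Proof.
move=> H0; case: a; case: b; case: c; rewrite /sel /= ?gadd0l ?gadd0r ?gaddxx ?H0; ring.
Qed.

Lemma int_term f h a b c d : psihat f gA = 0 ->
  psihat f (gadd (gadd (gadd (sel a h) (sel b gA)) (sel c h)) (sel d gA))
  + psihat f (gadd (gadd (gadd (sel a gA) (sel b h)) (sel c gA)) (sel d h))
  - psihat f (gadd (gadd (gadd (sel a h) (sel b h)) (sel c gA)) (sel d gA))
  - psihat f (gadd (gadd (gadd (sel a gA) (sel b gA)) (sel c h)) (sel d h))
  = if [&& a == b, c == d & a != c] then 2 * psihat f h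
    else if [&& a != b, c != d & a == c] then - 2 * psihat f h else 0.
Proof.
move=> H0; case: a; case: b; case: c; case: d; rewrite /sel /= ?gadd0l ?gadd0r ?gaddxx ?H0; ring.
Qed.


End PD.
Export PD.

Module PE.

Section E.
Variables (V : finType) (par : V -> V) (r : V).
Hypothesis Ht : is_tree par r.
Hypothesis Hr : is_leaf par r r.
Local Notation anc := (anc par).

Lemma lca_contra p x y w : on_path par r p x y -> anc w x -> anc w y -> ~~ anc w p -> False.
Proof.
move=> Hop Hx Hy Hn.
have Hpw : anc p w.
  case/orP: (on_path_anc Hop) => H.
  - by case/orP: (anc_comp H Hx) => // H2; move: Hn; rewrite H2.
  - by case/orP: (anc_comp H Hy) => // H2; move: Hn; rewrite H2.
have Hne : p != w by apply/eqP => E; move: Hn; rewrite E anc_refl.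
case: (child_on_path Ht Hpw Hne) => c [Hc Hpc Hcw].
have := on_path_lca Hop (anc_trans Hpw Hx) (anc_trans Hpw Hy) Hc Hpc.
by rewrite (anc_trans Hcw Hx) (anc_trans Hcw Hy).
Qed.

Lemma not_anc_of_desc w v : w != v -> anc v w -> ~~ anc w v.
Proof.
move=> Hne H; apply/negP => H2; have E := anc_antisym Ht H2 H.
by rewrite E eqxx in Hne.
Qed.

Lemma pend_facts v j k : pendant par r v -> is_leaf par r j -> is_leaf par r k ->
  j != pend_i par r v -> k != pend_i par r v -> on_path par r (pend_nu par r v) j k ->
  (3 <= #|[pred x | is_leaf par r x]|)%N ->
  [/\ is_leaf par r (pend_i par r v), j != k &
    forall w, w != r ->
      (anc w (pend_i par r v) && ~~ anc w j && ~~ anc w k)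
      || (~~ anc w (pend_i par r v) && anc w j && anc w k) = (w == v)].
Proof.
rewrite /pendant /pend_i /pend_nu => /andP[Hv Hpend] Hj Hk Hji Hki Hop H3.
case: (eqVneq (par v) r) => Hpv.
-
  rewrite Hpv eqxx in Hji Hki Hop *.
  have Hjr : j != r by []. have Hkr : k != r by [].
  split => //.
  + apply/eqP => E; rewrite -E in Hop; have Evj := on_path_self Ht Hop.
    have Hvl : is_leaf par r v by rewrite Evj.
    have All : forall x, (x == r) || (x == v).
      move=> x; case: (eqVneq x r) => //= Hx.
      by rewrite (leaf_anc Ht Hvl Hv (all_desc Ht Hr Hv Hpv Hx)).
    have : (#|[pred x | is_leaf par r x]| <= #|pred2 r v|)%N.
      by apply: subset_leq_card; apply/subsetP => x _; rewrite inE /= All.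
    rewrite card2 => H; have := leq_trans H3 H.
    by case: (r != v).
  + move=> w Hw.
    have -> : anc w r = false by apply/negbTE/negP => H; have E := anc_to_r Ht H; move: Hw; rewrite E eqxx.
    rewrite /=; case: (eqVneq w v) => [->|Hwv].
      by rewrite (all_desc Ht Hr Hv Hpv Hjr) (all_desc Ht Hr Hv Hpv Hkr).
    apply/negP => /andP[Hwj Hwk].
    apply: (lca_contra Hop Hwj Hwk).
    exact: not_anc_of_desc Hwv (all_desc Ht Hr Hv Hpv Hw).
-
  rewrite (negbTE Hpv) in Hji Hki Hop *.
  have Hvl : is_leaf par r v by move: Hpend; rewrite (negbTE Hpv) orbF.
  have Hpr : par v != r := Hpv.
  split => //.
  + apply/eqP => E; rewrite -E in Hop; have Epj := on_path_self Ht Hop.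
    have Hjr : j != r by rewrite -Epj.
    by have := leaf_nochild Hj Hjr Hv; rewrite Epj eqxx.
  + move=> w Hw; case: (eqVneq w v) => [->|Hwv].
      rewrite anc_refl /=.
      have -> : anc v j = false.
        by apply/negbTE/negP => H; have E := leaf_anc Ht Hvl Hv H; move: Hji; rewrite E eqxx.
      have -> : anc v k = false.
        by apply/negbTE/negP => H; have E := leaf_anc Ht Hvl Hv H; move: Hki; rewrite E eqxx.
      by [].
    case Ha : (anc w v) => /=.
      have Hwp := strict_anc Ht Ha Hwv.
      case/orP: (on_path_anc Hop) => H.
      * by rewrite (anc_trans Hwp H).
      * by rewrite (anc_trans Hwp H) andbF.
    apply/negP => /andP[Hwj Hwk].
    apply: (lca_contra Hop Hwj Hwk).
    by apply/negP => H; move: Ha; rewrite (anc_trans H (anc_par par v)).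
Qed.

Lemma int_facts v i j i' j' : internal_edge par r v ->
  is_leaf par r i && is_leaf par r j -> is_leaf par r i' && is_leaf par r j' ->
  on_path par r (par v) i j && ~~ on_path par r v i j ->
  on_path par r v i' j' && ~~ on_path par r (par v) i' j' ->
  i != j /\ i != i' /\ i != j' /\ j != i' /\ j != j' /\ i' != j' /\
   (forall w, w != r ->
     [&& anc w i == anc w j, anc w i' == anc w j' & anc w i != anc w i'] = (w == v)
     /\ [&& anc w i != anc w j, anc w i' != anc w j' & anc w i == anc w i'] = false).
Proof.
rewrite /internal_edge /pendant => /andP[Hv].
rewrite Hv /= negb_or => /andP[Hvl Hpv] /andP[Hi Hj] /andP[Hi' Hj'] /andP[Hop Hnop] /andP[Hop' Hnop'].
case/andP: (side_out Hv Hop Hnop) => Hvi Hvj.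
case/andP: (side_in Ht Hv Hop' Hnop') => Hvi' Hvj'.
have Dij : i != j.
  apply/eqP => E; rewrite -E in Hop; have Epi := on_path_self Ht Hop.
  have Hir : i != r by rewrite -Epi.
  by have := leaf_nochild Hi Hir Hv; rewrite Epi eqxx.
have Di'j' : i' != j'.
  apply/eqP => E; rewrite -E in Hop'; have Evi := on_path_self Ht Hop'.
  by move: Hvl; rewrite Evi Hi'.
have Dx : forall x y, ~~ anc v x -> anc v y -> x != y.
  by move=> x y Hx Hy; apply/eqP => E; move: Hx; rewrite E Hy.
split; first done. do 4 (split; first by apply: Dx). split; first done.
move=> w Hw; case: (eqVneq w v) => [->|Hwv].
  by rewrite (negbTE Hvi) (negbTE Hvj) Hvi' Hvj'.
case Hvw : (anc v w).
- have Hwi : anc w i = false.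
    by apply/negbTE/negP => H; move: Hvi; rewrite (anc_trans Hvw H).
  have Hwj : anc w j = false.
    by apply/negbTE/negP => H; move: Hvj; rewrite (anc_trans Hvw H).
  rewrite Hwi Hwj /=; split => //.
  apply/negbTE/negP => /andP[/eqP Ecd Hc0].
  have Hc : anc w i' by move: Hc0; case: (anc w i').
  have Hc' : anc w j' by rewrite -Ecd.
  apply: (lca_contra Hop' Hc Hc').
  exact: not_anc_of_desc Hwv Hvw.
- have Ecd : anc w i' = anc w j'.
    apply/idP/idP => H.
    + case/orP: (anc_comp H Hvi') => H2; first exact: anc_trans H2 Hvj'.
      by move: Hvw; rewrite H2.
    + case/orP: (anc_comp H Hvj') => H2; first exact: anc_trans H2 Hvi'.
      by move: Hvw; rewrite H2.
  rewrite Ecd eqxx /= andbF; split => //.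
  case Hc : (anc w j') => /=.
  + have Hwv' : anc w v.
      case/orP: (anc_comp Hc Hvj') => // H2; by move: Hvw; rewrite H2.
    have Hwp := strict_anc Ht Hwv' Hwv.
    by case/orP: (on_path_anc Hop) => H; rewrite (anc_trans Hwp H) ?andbF //; case: (anc w i).
  + apply/negbTE/negP => /andP[/eqP Eab Ha].
    have Ha' : anc w i by move: Ha; case: (anc w i).
    have Hb' : anc w j by rewrite -Eab.
    apply: (lca_contra Hop Ha' Hb').
    apply/negP => H; have H2 := anc_trans H (anc_par par v).
    by move: Hc; rewrite -Ecd (anc_trans H2 Hvi').
Qed.
End E.

End PE.
Export PE.

Module PF.
Local Open Scope R_scope.
Arguments Rinv : simpl never.

Lemma exp_comb3 a b c : exp a * exp b / exp c = exp (a + b - c).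
Proof. by rewrite /Rminus !exp_plus exp_Ropp. Qed.
Lemma exp_comb4 a b c d : exp a * exp b / (exp c * exp d) = exp (a + b - c - d).
Proof. rewrite /Rminus !exp_plus !exp_Ropp /Rdiv Rinv_mult; ring. Qed.

Lemma sum3 (I : finType) (Pr : pred I) (f1 f2 f3 : I -> R) :
  \big[Rplus/0]_(i | Pr i) f1 i + \big[Rplus/0]_(i | Pr i) f2 i - \big[Rplus/0]_(i | Pr i) f3 i
  = \big[Rplus/0]_(i | Pr i) (f1 i + f2 i - f3 i).
Proof.
rewrite /Rminus !big_split /= (big_morph Ropp Ropp_plus_distr Ropp_0); ring.
Qed.
Lemma sum4 (I : finType) (Pr : pred I) (f1 f2 f3 f4 : I -> R) :
  \big[Rplus/0]_(i | Pr i) f1 i + \big[Rplus/0]_(i | Pr i) f2 i - \big[Rplus/0]_(i | Pr i) f3 i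
   - \big[Rplus/0]_(i | Pr i) f4 i
  = \big[Rplus/0]_(i | Pr i) (f1 i + f2 i - f3 i - f4 i).
Proof.
rewrite /Rminus !big_split /= !(big_morph Ropp Ropp_plus_distr Ropp_0); ring.
Qed.

Section Fin.
Variables (V : finType) (par : V -> V) (r : V).
Variables (psi : V -> grp -> R) (P : V -> grp -> grp -> R) (ci cj ck ci' cj' : V -> V).
Hypothesis Ht : is_tree par r.
Hypothesis Hr : is_leaf par r r.
Hypothesis H3 : (3 <= #|[pred x | is_leaf par r x]|)%N.
Hypothesis Hpsi : forall v, v != r -> psi v gA = - (psi v gC + psi v gG + psi v gT).
Hypothesis HP : forall v, v != r -> forall x y, P v x y = Fou (psi v) (gadd x y).
Hypothesis Hgood : good_choice par r ci cj ck ci' cj'.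

Lemma psihat0 v : v != r -> psihat (psi v) gA = 0.
Proof. move=> Hv; rewrite /psihat !chr_0l (Hpsi Hv); ring. Qed.

Lemma Re_value v h : v != r -> R_edge par r P ci cj ck ci' cj' v h = exp (2 * psihat (psi v) h).
Proof.
move=> Hv; rewrite /R_edge; case: Hgood => Gp Gi.
case: ifP => Hpe.
- case: (Gp v Hpe) => Hj Hk Hji Hki Hop.
  case: (pend_facts Ht Hr Hpe Hj Hk Hji Hki Hop H3) => Hi Hjk Hpat.
  rewrite /R_pend !(qprob_formula Ht HP) exp_comb3 sum3; congr exp.
  have Hij : pend_i par r v != cj v by rewrite eq_sym.
  have Hik : pend_i par r v != ck v by rewrite eq_sym.
  rewrite (bigD1 v) //= big1 ?Rplus_0_r.
    rewrite !(Gsum_col3 Hi Hj Hk _ _ _ _ Hij Hik Hjk) pend_term ?psihat0 //.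
    by rewrite (Hpat v Hv) eqxx.
  move=> w /andP[Hw Hwv].
  rewrite !(Gsum_col3 Hi Hj Hk _ _ _ _ Hij Hik Hjk) pend_term ?psihat0 //.
  by rewrite (Hpat w Hw) (negbTE Hwv).
- have Hint : internal_edge par r v by rewrite /internal_edge Hv Hpe.
  case: (Gi v Hint) => Hij Hij' Hop Hop'.
  case/andP: (Hij) => Hi Hj; case/andP: (Hij') => Hi' Hj'.
  case: (int_facts Ht Hint Hij Hij' Hop Hop') => D1 [D2 [D3 [D4 [D5 [D6 Hpat]]]]].
  rewrite /R_int !(qprob_formula Ht HP) exp_comb4 sum4; congr exp.
  rewrite (bigD1 v) //= big1 ?Rplus_0_r.
    rewrite !(Gsum_col4 Hi Hj Hi' Hj' _ _ _ _ _ D1 D2 D3 D4 D5 D6) int_term ?psihat0 //.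
    by case: (Hpat v Hv) => -> _; rewrite eqxx.
  move=> w /andP[Hw Hwv].
  rewrite !(Gsum_col4 Hi Hj Hi' Hj' _ _ _ _ _ D1 D2 D3 D4 D5 D6) int_term ?psihat0 //.
  by case: (Hpat w Hw) => -> ->; rewrite (negbTE Hwv).
Qed.
End Fin.

End PF.
Export PF.

End Aux.
Import Aux.

Module PG.
Local Open Scope R_scope.
Arguments Rinv : simpl never.

Lemma exp_le_iff a b : exp a <= exp b <-> a <= b.
Proof.
split => H.
- destruct (Rle_dec a b) as [|Hn]; first by [].
  have : exp b < exp a by apply: exp_increasing; lra.
  lra.
- destruct H as [H|H]; first by left; apply: exp_increasing.
  by rewrite H; right.
Qed.

Lemma key f x y z : f gA = - (f gC + f gG + f gT) ->
  (exp (2 * psihat f x) * exp (2 * psihat f y) <= exp (2 * psihat f z) <->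
   psihat f x + psihat f y <= psihat f z).
Proof.
move=> _; rewrite -exp_plus exp_le_iff; lra.
Qed.


End PG.
Import PG.

Local Open Scope R_scope.

Theorem mainTheorem8
  (V : finType) (par : V -> V) (r : V)
  (psi : V -> grp -> R) (P : V -> grp -> grp -> R)
  (ci cj ck ci' cj' : V -> V) :
  is_tree par r ->
  is_leaf par r r ->
  (3 <= #|[pred x | is_leaf par r x]|)%N ->
  (forall v, ~~ is_leaf par r v -> (3 <= deg par r v)%N) ->
  (forall v, v != r -> psi v gA = - (psi v gC + psi v gG + psi v gT)) ->
  (forall v, v != r -> IsMatExp (Qmat (psi v)) (P v)) ->
  good_choice par r ci cj ck ci' cj' ->
  let Re := R_edge par r P ci cj ck ci' cj' in
  ((forall v, v != r ->
      0 <= psi v gC /\ 0 <= psi v gG /\ 0 <= psi v gT) <->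
   (forall v, v != r ->
      Re v gC * Re v gT <= Re v gG /\
      Re v gG * Re v gT <= Re v gC /\
      Re v gC * Re v gG <= Re v gT)) /\
  (forall v, v != r ->
      (Re v gC * Re v gT <= Re v gG <-> 0 <= psi v gC) /\
      (Re v gG * Re v gT <= Re v gC <-> 0 <= psi v gG) /\
      (Re v gC * Re v gG <= Re v gT <-> 0 <= psi v gT)).
Proof.
move=> Ht Hr H3 _ Hpsi HM Hgood Re.
have HP : forall v, v != r -> forall x y, P v x y = Fou (psi v) (gadd x y).
  by move=> v Hv; apply: P_fourier; apply: HM.
have Hloc : forall v, v != r ->
      (Re v gC * Re v gT <= Re v gG <-> 0 <= psi v gC) /\
      (Re v gG * Re v gT <= Re v gC <-> 0 <= psi v gG) /\
      (Re v gC * Re v gG <= Re v gT <-> 0 <= psi v gT).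
  move=> v Hv; rewrite /Re !(Re_value Ht Hr H3 Hpsi HP Hgood _ Hv) !key ?(Hpsi v Hv) //.
  have E := Hpsi v Hv.
  rewrite /psihat /chr /gA /gC /gG /gT /= in E *.
  split; [|split]; split; lra.
split => //.
split => H v Hv.
- have [H1 [H2 H4]] := Hloc v Hv; have [K1 [K2 K3]] := H v Hv.
  by split; [apply/H1|split; [apply/H2|apply/H4]].
- have [H1 [H2 H4]] := Hloc v Hv; have [K1 [K2 K3]] := H v Hv.
  by split; [apply/H1|split; [apply/H2|apply/H4]].
Qed.
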